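(* Let $R$ be a nontrivial finite commutative ring, $\Sigma$ an alphabet, and $r\in R\langle\langle\Sigma^*\rangle\rangle$ a series that is rational over $R$. Then $r\in\mathrm{Rev}(R,\Sigma)$ if and only if $\mathrm{supp}(r+x\cdot\underline{\Sigma^*})\in\mathrm{RevL}(R,\Sigma)$ for all $x\in R$, where $x\cdot\underline{\Sigma^*}$ denotes the series with coefficient $x$ at every word of $\Sigma^*$.
   Context: A ring is a semiring $(R,+,\cdot,0,1)$ whose additive monoid is an abelian group; nontrivial means $0\neq1$. For a semiring $S$ and finite nonempty alphabet $\Sigma$, a series is a map $r\colon\Sigma^*\to S$ with value $(r,w)$; the set of series is $S\langle\langle\Sigma^*\rangle\rangle$ with pointwise addition; the support is $\mathrm{supp}(r)=\{w\mid(r,w)\neq0\}$. A weighted automaton over $S$ and $\Sigma$ is $\mathcal{A}=(Q,\sigma,\iota,\tau)$ with $Q$ finite, $\sigma\colon Q\times\Sigma\times Q\to S$, $\iota,\tau\colon Q\to S$; a run on $w=a_1\cdots a_t$ is $q_0a_1q_1\cdots a_tq_t$ with all $\sigma(q_{k-1},a_k,q_k)\neq0$, of weight $\iota(q_0)\sigma(q_0,a_1,q_1)\cdots\sigma(q_{t-1},a_t,q_t)\tau(q_t)$, and $(\|\mathcal{A}\|,w)$ is the sum of weights of all runs on $w$. A series is rational over $S$ if it equals $\|\mathcal{A}\|$ for some weighted automaton $\mathcal{A}$ over $S$. $\mathcal{A}$ is reversible if for all $p,p',q,q'\in Q$, $a\in\Sigma$: $\sigma(p,a,q)\neq0\neq\sigma(p,a,q')$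 implies $q=q'$, and $\sigma(p,a,q)\neq0\neq\sigma(p',a,q)$ implies $p=p'$. $\mathrm{Rev}(S,\Sigma)$ is the set of series realised by reversible weighted automata over $S$ and $\Sigma$, and $\mathrm{RevL}(S,\Sigma)=\{\mathrm{supp}(r)\mid r\in\mathrm{Rev}(S,\Sigma)\}$. *)

(* Defs.v *)
From HB Require Import structures.
From mathcomp Require Import all_boot all_order all_algebra.
Set Implicit Arguments. Unset Strict Implicit. Unset Printing Implicit Defensive.
Import GRing.Theory.
Local Open Scope ring_scope.

Definition series (S : nmodType) (Sigma : finType) := seq Sigma -> S.

Definition supp (S : nmodType) (Sigma : finType) (r : series S Sigma) : pred (seq Sigma) :=
  fun w => r w != 0.

Record wautomaton (S : pzSemiRingType) (Sigma : finType) (Q : finType) := WAutomaton {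
  wa_sigma : Q -> Sigma -> Q -> S;
  wa_iota  : Q -> S;
  wa_tau   : Q -> S }.

(* A run on w = a_1...a_t is a sequence of states q_0 ... q_t with all
   transitions sigma(q_{k-1}, a_k, q_k) nonzero. *)
Definition is_run (S : pzSemiRingType) (Sigma Q : finType) (A : wautomaton S Sigma Q)
  (w : seq Sigma) (qs : {ffun 'I_(size w).+1 -> Q}) : bool :=
  [forall k : 'I_(size w),
     wa_sigma A (qs (widen_ord (leqnSn _) k)) (tnth (in_tuple w) k) (qs (lift ord0 k)) != 0].

Definition run_weight (S : pzSemiRingType) (Sigma Q : finType) (A : wautomaton S Sigma Q)
  (w : seq Sigma) (qs : {ffun 'I_(size w).+1 -> Q}) : S :=
  wa_iota A (qs ord0) *
  (\prod_(k < size w)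
     wa_sigma A (qs (widen_ord (leqnSn _) k)) (tnth (in_tuple w) k) (qs (lift ord0 k))) *
  wa_tau A (qs ord_max).

Definition behaviour (S : pzSemiRingType) (Sigma Q : finType) (A : wautomaton S Sigma Q)
  : series S Sigma :=
  fun w => \sum_(qs : {ffun 'I_(size w).+1 -> Q} | is_run A qs) run_weight A qs.

Definition rational (S : pzSemiRingType) (Sigma : finType) (r : series S Sigma) : Prop :=
  exists (Q : finType) (A : wautomaton S Sigma Q), forall w, r w = behaviour A w.

Definition reversible (S : pzSemiRingType) (Sigma Q : finType) (A : wautomaton S Sigma Q) : Prop :=
  (forall (p q q' : Q) (a : Sigma),
      wa_sigma A p a q != 0 -> wa_sigma A p a q' != 0 -> q = q') /\
  (forall (p p' q : Q) (a : Sigma),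
      wa_sigma A p a q != 0 -> wa_sigma A p' a q != 0 -> p = p').

Definition Rev (S : pzSemiRingType) (Sigma : finType) (r : series S Sigma) : Prop :=
  exists (Q : finType) (A : wautomaton S Sigma Q), reversible A /\ forall w, r w = behaviour A w.

Definition RevL (S : pzSemiRingType) (Sigma : finType) (L : pred (seq Sigma)) : Prop :=
  exists r : series S Sigma, Rev r /\ supp r =1 L.

Definition add_const (S : pzSemiRingType) (Sigma : finType) (r : series S Sigma) (x : S)
  : series S Sigma := fun w => r w + x.
Arguments RevL S {Sigma} L.

(* Main.v *)
Require Import Defs.
From HB Require Import structures.
From mathcomp Require Import all_boot all_order all_algebra.
Set Implicit Arguments. Unset Strict Implicit. Unset Printing Implicit Defensive.
Import GRing.Theory.
Local Open Scope ring_scope.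

Section CFsec.
Variables (R : finComNzRingType) (Sigma : finType).

Fixpoint frun (Q : Type) (step : Sigma -> Q -> option Q) (w : seq Sigma) (p : Q) : option Q :=
  match w with
  | [::] => Some p
  | a :: w' => match step a p with Some q => frun step w' q | None => None end
  end.

Definition PIinj (Q : Type) (step : Sigma -> Q -> option Q) :=
  forall a p p' q, step a p = Some q -> step a p' = Some q -> p = p'.

Definition fsem (Q : finType) (step : Sigma -> Q -> option Q) (i t : Q -> R) (w : seq Sigma) : R :=
  \sum_p i p * oapp t 0 (frun step w p).

Definition CF (s : series R Sigma) : Prop :=
  exists (Q : finType) (step : Sigma -> Q -> option Q) (i t : Q -> R),
    PIinj step /\ forall w, s w = fsem step i t w.

Lemma CF_ext s s' : CF s -> s =1 s' -> CF s'.
Proof.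
move=> [Q [st [i [t [H1 H2]]]]] E; exists Q, st, i, t; split=> // w.
by rewrite -E.
Qed.

Lemma CF_const (c : R) : CF (fun _ => c).
Proof.
exists unit, (fun _ _ => Some tt), (fun _ => c), (fun _ => 1); split.
  by move=> a [] [].
move=> w; rewrite /fsem (big_pred1 tt); last by case.
have -> : frun (fun _ _ => Some tt) w tt = Some tt by elim: w.
by rewrite /= mulr1.
Qed.

Lemma CF_scale (c : R) s : CF s -> CF (fun w => c * s w).
Proof.
move=> [Q [st [i [t [H1 H2]]]]]; exists Q, st, (fun p => c * i p), t; split=> // w.
by rewrite H2 /fsem mulr_sumr; apply: eq_bigr => p _; rewrite mulrA.
Qed.

Lemma CF_add s1 s2 : CF s1 -> CF s2 -> CF (fun w => s1 w + s2 w).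
Proof.
move=> [Q1 [st1 [i1 [t1 [H1 E1]]]]] [Q2 [st2 [i2 [t2 [H2 E2]]]]].
pose st a (x : Q1 + Q2) := match x with
  | inl p => omap inl (st1 a p) | inr p => omap inr (st2 a p) end.
pose i (x : Q1 + Q2) := match x with inl p => i1 p | inr p => i2 p end.
pose t (x : Q1 + Q2) := match x with inl p => t1 p | inr p => t2 p end.
exists (Q1 + Q2)%type, st, i, t; split.
  move=> a [p|p] [p'|p'] y /=.
  - case E: (st1 a p) => [q|] //; case E': (st1 a p') => [q'|] //= [<-] [] Hq.
    by congr inl; apply: (H1 a p p' q E); rewrite E' Hq.
  - by case: (st1 a p) => // ?; case: (st2 a p') => // ? [<-].
  - by case: (st2 a p) => // ?; case: (st1 a p') => // ? [<-].
  - case E: (st2 a p) => [q|] //; case E': (st2 a p') => [q'|] //= [<-] [] Hq.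
    by congr inr; apply: (H2 a p p' q E); rewrite E' Hq.
have fl w p : frun st w (inl p) = omap inl (frun st1 w p).
  elim: w p => //= a w IH p; case: (st1 a p) => //.
have fr w p : frun st w (inr p) = omap inr (frun st2 w p).
  elim: w p => //= a w IH p; case: (st2 a p) => //.
move=> w; rewrite E1 E2 /fsem big_sumType /=; congr (_ + _); apply: eq_bigr => p _.
  by rewrite fl; case: (frun st1 w p).
by rewrite fr; case: (frun st2 w p).
Qed.

Lemma CF_mul s1 s2 : CF s1 -> CF s2 -> CF (fun w => s1 w * s2 w).
Proof.
move=> [Q1 [st1 [i1 [t1 [H1 E1]]]]] [Q2 [st2 [i2 [t2 [H2 E2]]]]].
pose st a (x : Q1 * Q2) := match st1 a x.1, st2 a x.2 with
  | Some q1, Some q2 => Some (q1, q2) | _, _ => None end.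
exists (Q1 * Q2)%type, st, (fun x => i1 x.1 * i2 x.2), (fun x => t1 x.1 * t2 x.2); split.
  move=> a [p1 p2] [p1' p2'] [q1 q2]; rewrite /st /=.
  case E1': (st1 a p1) => [x|] //; case E2': (st2 a p2) => [y|] // [ex ey].
  case E1'': (st1 a p1') => [x'|] //; case E2'': (st2 a p2') => [y'|] // [ex' ey'].
  subst.
  by rewrite (H1 a p1 p1' q1 E1') ?E1'' // (H2 a p2 p2' q2 E2') ?E2''.
have fp w p1 p2 : frun st w (p1, p2) = match frun st1 w p1, frun st2 w p2 with
  | Some q1, Some q2 => Some (q1, q2) | _, _ => None end.
  elim: w p1 p2 => //= a w IH p1 p2; rewrite /st /=.
  case: (st1 a p1) => [x|]; case: (st2 a p2) => [y|] //=.
  by case: (frun st1 w x).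
move=> w; rewrite E1 E2 /fsem mulr_suml.
pose G a b := (i1 a * i2 b) * oapp (fun y : Q1 * Q2 => t1 y.1 * t2 y.2) 0 (frun st w (a, b)).
rewrite [RHS](eq_bigr (fun x => G x.1 x.2)); last by case.
rewrite -(pair_bigA _ G); apply: eq_bigr => p1 _.
rewrite mulr_sumr; apply: eq_bigr => p2 _; rewrite /G fp.
case: (frun st1 w p1) => [x|]; case: (frun st2 w p2) => [y|] /=;
  rewrite ?mulr0 ?mul0r //.
by rewrite mulrACA.
Qed.


Lemma CF_sum_seq (I : Type) (l : seq I) (F : I -> series R Sigma) :
  (forall i, CF (F i)) -> CF (fun w => \sum_(i <- l) F i w).
Proof.
move=> H; elim: l => [|a l IH].
  by apply: (CF_ext (CF_const 0)) => w; rewrite big_nil.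
by apply: (CF_ext (CF_add (H a) IH)) => w; rewrite big_cons.
Qed.

Lemma CF_prod_seq (I : Type) (l : seq I) (F : I -> series R Sigma) :
  (forall i, CF (F i)) -> CF (fun w => \prod_(i <- l) F i w).
Proof.
move=> H; elim: l => [|a l IH].
  by apply: (CF_ext (CF_const 1)) => w; rewrite big_nil.
by apply: (CF_ext (CF_mul (H a) IH)) => w; rewrite big_cons.
Qed.

Lemma CF_sum (I : finType) (F : I -> series R Sigma) :
  (forall i, CF (F i)) -> CF (fun w => \sum_i F i w).
Proof. by move=> H; apply: (CF_ext (CF_sum_seq (index_enum I) H)). Qed.

Lemma CF_prod (I : finType) (F : I -> series R Sigma) :
  (forall i, CF (F i)) -> CF (fun w => \prod_i F i w).
Proof. by move=> H; apply: (CF_ext (CF_prod_seq (index_enum I) H)). Qed.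

Lemma CF_ind (Q : finType) (st : Sigma -> Q -> option Q) (p q : Q) :
  PIinj st -> CF (fun w => (frun st w p == Some q)%:R).
Proof.
move=> Hi; exists Q, st, (fun x => (x == p)%:R), (fun x => (x == q)%:R); split=> // w.
rewrite /fsem (bigD1 p) //= eqxx mul1r big1 ?addr0.
  by case: (frun st w p) => [x|] //=; rewrite ?eqxx.
by move=> x /negbTE ->; rewrite mul0r.
Qed.

Lemma prod_indE (T : finType) (X Y : {set T}) :
  \prod_(t : T) (if t \in Y then (t \in X)%:R else 1 - (t \in X)%:R) = (X == Y)%:R :> R.
Proof.
case: (altP (X =P Y)) => [->|neq].
  apply: big1 => t _; case: (t \in Y) => //=; by rewrite subr0.
have [t Ht] : exists t, (t \in X) != (t \in Y).
  apply/existsP; apply: contraR neq => /existsPn H; apply/eqP/setP => t.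
  by move: (H t); rewrite negbK => /eqP.
rewrite (bigD1 t) //=.
move: Ht; case: (t \in X); case: (t \in Y) => //= _; rewrite ?subrr mul0r //.
Qed.

Lemma CF_fun (g : R -> R) s : CF s -> CF (fun w => g (s w)).
Proof.
move=> [Q [st [i [t [Hi E]]]]].
pose X w := [set x : Q * Q | frun st w x.1 == Some x.2].
pose G (Y : {set Q * Q}) := g (\sum_(x in Y) i x.1 * t x.2).
have sE w : s w = \sum_(x in X w) i x.1 * t x.2.
  rewrite E /fsem [RHS]big_mkcond /=.
  pose H (a b : Q) := if (a, b) \in X w then i a * t b else 0.
  rewrite [RHS](eq_bigr (fun x => H x.1 x.2)); last by case.
idtac.
  rewrite -(pair_bigA _ H); apply: eq_bigr => p _.
  rewrite /H; case Ef: (frun st w p) => [q|] /=.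
    rewrite (bigD1 q) //= inE /= Ef eqxx big1 ?addr0 // => q' Hq'.
    by rewrite inE /= Ef; case: eqP => // [[]] E'; rewrite E' eqxx in Hq'.
  by rewrite mulr0 big1 // => q' _; rewrite inE /= Ef.
apply: (CF_ext (s := fun w => \sum_(Y : {set Q * Q}) G Y *
   \prod_(x : Q * Q) (if x \in Y then (frun st w x.1 == Some x.2)%:R
                      else 1 - (frun st w x.1 == Some x.2)%:R))).
  apply: CF_sum => Y; apply: CF_scale; apply: CF_prod => x.
  case: (x \in Y); first exact: CF_ind.
  apply: CF_add; first exact: CF_const.
  apply: (CF_ext (CF_scale (-1) (CF_ind x.1 x.2 Hi))) => w; by rewrite mulN1r.
move=> w.
rewrite (eq_bigr (fun Y => G Y * (X w == Y)%:R)); last first.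
  move=> Y _; congr (_ * _); rewrite -prod_indE; apply: eq_bigr => x _.
  by rewrite inE.
rewrite (bigD1 (X w)) //= eqxx mulr1 big1 ?addr0; first by rewrite /G sE.
by move=> Y /negbTE; rewrite eq_sym => ->; rewrite mulr0.
Qed.



Lemma sum_ind (N k : nat) (F : nat -> R) :
  \sum_(m < N) (k == m)%:R * F m = if (k < N)%N then F k else 0.
Proof.
case: ltnP => H.
  rewrite (bigD1 (Ordinal H)) //= eqxx mul1r big1 ?addr0 // => m Hm.
  have -> : (k == m) = false.
    by apply/negbTE; apply: contra Hm => /eqP Hk; apply/eqP/val_inj.
  by rewrite mul0r.
apply: big1 => m _; have -> : (k == m) = false.
  by apply/negbTE; apply: contraTneq H => ->; rewrite -ltnNge ltn_ord.
by rewrite mul0r.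
Qed.

Lemma pow_decomp (g : R) : exists (K P' : nat) (per corr : nat -> R), forall n : nat,
  g ^+ n = \sum_(m < P'.+1) ((n %% P'.+1)%N == m)%:R * per m + \sum_(j < K) (n == j)%:R * corr j.
Proof.
pose f (i : 'I_#|R|.+1) := g ^+ i.
have : ~~ injectiveb f.
  apply/negP => /injectiveP Hf; have := leq_card f Hf; rewrite card_ord ltnn.
  by [].
move=> /injectivePn [i [j Hij Efij]].
have [i' [j' [Hlt Eij]]] : exists i' j' : nat, (i' < j')%N /\ g ^+ i' = g ^+ j'.
  case: (ltngtP i j) => H.
  - by exists i, j.
  - by exists j, i; split => //; rewrite /f in Efij; rewrite Efij.
  - by move/val_inj: H => H; rewrite H eqxx in Hij.
set P := (j' - i')%N.
have P0 : (0 < P)%N by rewrite subn_gt0.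
have step1 x : (i' <= x)%N -> g ^+ (x + P) = g ^+ x.
  move=> Hx; rewrite -(subnKC Hx) -addnA (addnC _ P) addnA /P (subnKC (ltnW Hlt)).
  by rewrite !exprD Eij.
have stept t x : (i' <= x)%N -> g ^+ (x + P * t) = g ^+ x.
  elim: t => [|t IH] Hx; first by rewrite muln0 addn0.
  rewrite mulnS (addnC P) addnA step1 ?IH //.
  exact: leq_trans Hx (leq_addr _ _).
have perE a b : (i' <= a)%N -> (i' <= b)%N -> (a %% P = b %% P)%N -> g ^+ a = g ^+ b.
  wlog Hab : a b / (a <= b)%N.
    move=> W Ha Hb E; case: (leqP a b) => H; first exact: W.
    by apply/esym/W => //; apply: ltnW.
  move=> Ha Hb /eqP E; move: E; rewrite eq_sym (eqn_mod_dvd _ Hab) => /dvdnP [t Et].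
  by rewrite -(subnKC Hab) Et mulnC stept.
exists i', P.-1, (fun m => g ^+ (m + P * i')), (fun j => g ^+ j - g ^+ (j %% P + P * i')%N).
move=> n; rewrite (prednK P0) (sum_ind _ _ (fun m => g ^+ (m + P * i')%N)) (sum_ind _ _ (fun j => g ^+ j - g ^+ (j %% P + P * i')%N)) ltn_pmod //.
case: ltnP => Hn.
  by rewrite addrC subrK.
rewrite addr0; apply: perE => //.
  by apply: leq_trans (leq_addl _ _); rewrite leq_pmull.
by rewrite addnC mulnC modnMDl modn_mod.
Qed.

Section Bridge.
Variables (Q : finType) (A : wautomaton R Sigma Q).

Definition tstep (a : Sigma) (q : Q) : Q := odflt q [pick q' | wa_sigma A q a q' != 0].
Definition stf (q : Q) (a : Sigma) := tstep a q.
Definition st (p : Q) (w : seq Sigma) (k : nat) : Q := foldl stf p (take k w).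
Definition endst (p : Q) (w : seq Sigma) : Q := foldl stf p w.
Fixpoint alive (p : Q) (w : seq Sigma) : bool :=
  match w with [::] => true | a :: w' => (wa_sigma A p a (tstep a p) != 0) && alive (tstep a p) w' end.
Fixpoint wt (p : Q) (w : seq Sigma) : R :=
  match w with [::] => 1 | a :: w' => wa_sigma A p a (tstep a p) * wt (tstep a p) w' end.

Definition fdet := forall (p q q' : Q) (a : Sigma),
      wa_sigma A p a q != 0 -> wa_sigma A p a q' != 0 -> q = q'.

Lemma tstepP (H : fdet) p a q : wa_sigma A p a q != 0 -> tstep a p = q.
Proof.
rewrite /tstep; case: pickP => [q' Hq'|H0] Hq /=; first exact: H Hq' Hq.
by rewrite H0 in Hq.
Qed.

Lemma forall_recl n (P : pred 'I_n.+1) :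
  [forall k, P k] = P ord0 && [forall k : 'I_n, P (lift ord0 k)].
Proof.
apply/forallP/andP => [H|[H0 H1] k]; first by split; [exact: H | apply/forallP => k; exact: H].
by case: (unliftP ord0 k) => [j ->|->] //; exact: (forallP H1 j).
Qed.

Lemma alive_forall x0 p w :
  [forall k : 'I_(size w), wa_sigma A (st p w k) (nth x0 w k) (st p w k.+1) != 0] = alive p w.
Proof.
elim: w p => [|a w IH] p; first by apply/forallP => -[].
rewrite /= forall_recl -IH; congr andb.
by rewrite /st /= take0.
Qed.

Lemma wt_prod x0 p w :
  \prod_(k < size w) wa_sigma A (st p w k) (nth x0 w k) (st p w k.+1) = wt p w.
Proof.
elim: w p => [|a w IH] p; first by rewrite big_ord0.
by rewrite /= big_ord_recl -IH /st /= take0.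
Qed.

Definition path (p : Q) (w : seq Sigma) : {ffun 'I_(size w).+1 -> Q} := [ffun k : 'I_(size w).+1 => st p w k].

Lemma st_succ (x0 : Sigma) (p : Q) (w : seq Sigma) (k : nat) : (k < size w)%N -> st p w k.+1 = tstep (nth x0 w k) (st p w k).
Proof. by move=> Hk; rewrite /st (take_nth x0 Hk) foldl_rcons. Qed.

Lemma run_path (H : fdet) w (qs : {ffun 'I_(size w).+1 -> Q}) :
  is_run A qs -> qs = path (qs ord0) w.
Proof.
move=> /forallP Hr.
have K : forall k (Hk : (k <= size w)%N), qs (Ordinal (n:=(size w).+1) Hk) = st (qs ord0) w k.
  elim=> [|k IH] Hk.
    by rewrite /st take0 /=; congr (qs _); apply: val_inj.
  have Hk' : (k < size w)%N by [].
  set x0 := tnth (in_tuple w) (Ordinal Hk').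
  have -> : Ordinal (n:=(size w).+1) (m:=k.+1) Hk = lift ord0 (Ordinal Hk') by apply: val_inj.
  have := Hr (Ordinal Hk'); rewrite /= -/x0 => /(tstepP H) <-.
  rewrite (st_succ x0 _ Hk') -(IH (ltnW Hk)) {1}/x0 (tnth_nth x0) /=.
  congr (tstep _ (qs _)); apply: val_inj => //.
apply/ffunP => i; rewrite ffunE -(K i (ltn_ord i)); congr (qs _); exact: val_inj.
Qed.

Lemma beh_fb (H : fdet) (x0 : Sigma) w :
  behaviour A w = \sum_p (if alive p w then wa_iota A p * wt p w * wa_tau A (endst p w) else 0).
Proof.
rewrite /behaviour /=. rewrite (partition_big (fun qs : {ffun 'I_(size w).+1 -> Q} => qs ord0) predT) //=.
apply: eq_bigr => p _.
have runP : is_run A (path p w) = alive p w.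
  rewrite -(alive_forall x0); apply: eq_forallb => k.
  by rewrite !ffunE (tnth_nth x0).
have rwP : run_weight A (path p w) = wa_iota A p * wt p w * wa_tau A (endst p w).
  rewrite /run_weight -(wt_prod x0) !ffunE /= /st take0 /= take_size.
  by congr (_ * _ * _); apply: eq_bigr => k _; rewrite !ffunE (tnth_nth x0).
have predE : forall qs : {ffun 'I_(size w).+1 -> Q},
    is_run A qs && (qs ord0 == p) = alive p w && (qs == path p w).
  move=> qs; apply/andP/andP => [[Hr /eqP Hp]|[Ha /eqP ->]].
    by split; [rewrite -runP -Hp -(run_path H Hr) | rewrite {1}(run_path H Hr) Hp].
  by rewrite runP ffunE /st take0.
rewrite (eq_bigl _ _ predE); case: (alive p w).
  by rewrite (big_pred1 (path p w)) // => qs.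
by rewrite big_pred0.
Qed.


Definition bdet := forall (p p' q : Q) (a : Sigma),
      wa_sigma A p a q != 0 -> wa_sigma A p' a q != 0 -> p = p'.

Fixpoint cnt (g : R) (p : Q) (w : seq Sigma) : nat :=
  match w with [::] => 0%N
  | a :: w' => ((wa_sigma A p a (tstep a p) == g) + cnt g (tstep a p) w')%N end.

Definition iterO (C : Type) (inc : C -> option C) (n : nat) (c : C) : option C :=
  iter n (obind inc) (Some c).

Lemma iter_none (C : Type) (inc : C -> option C) n : iter n (obind inc) None = None.
Proof. by elim: n => //= n ->. Qed.

Lemma iterO_Sr (C : Type) (inc : C -> option C) n c :
  obind inc (iterO inc n c) = iter n (obind inc) (inc c).
Proof. exact: (iterSr n (obind inc) (Some c)). Qed.

Lemma CF_track (Hf : fdet) (Hb : bdet) (C : finType) (inc : C -> option C)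
  (Hinc : forall c1 c2 c, inc c1 = Some c -> inc c2 = Some c -> c1 = c2)
  (g : R) (c0 : C) (pc : pred C) (p0 q0 : Q) :
  CF (fun w => ((alive p0 w && (endst p0 w == q0)) && oapp pc false (iterO inc (cnt g p0 w) c0))%:R).
Proof.
pose step a (x : Q * C) :=
  let q' := tstep a x.1 in
  if wa_sigma A x.1 a q' != 0 then
    (if wa_sigma A x.1 a q' == g then omap (pair q') (inc x.2) else Some (q', x.2))
  else None.
have Hi : PIinj step.
  move=> a [q1 c1] [q2 c2] [q c]; rewrite /step /=.
  case: ifP => // H1; case: ifP => // H2; case: ifP => // H3; case: ifP => // H4.
  - case E1: (inc c1) => [d1|] //= [ea eb]; case E2: (inc c2) => [d2|] //= [ea' eb'].
    have t12 : tstep a q2 = tstep a q1 by rewrite ea ea'.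
    rewrite t12 in H3; have eq12 := Hb _ _ _ _ H1 H3; subst.
    by rewrite (Hinc _ _ _ E1 E2).
  - case E1: (inc c1) => [d1|] //= [ea eb] [ea' eb'].
    have t12 : tstep a q2 = tstep a q1 by rewrite ea ea'.
    rewrite t12 in H3 H4; have eq12 := Hb _ _ _ _ H1 H3; subst.
    by rewrite H2 in H4.
  - case E2: (inc c2) => [d2|] //= [ea eb] [ea' eb'].
    have t12 : tstep a q2 = tstep a q1 by rewrite ea ea'.
    rewrite t12 in H3 H4; have eq12 := Hb _ _ _ _ H1 H3; subst.
    by rewrite H2 in H4.
  - move=> [ea eb] [ea' eb'].
    have t12 : tstep a q2 = tstep a q1 by rewrite ea ea'.
    rewrite t12 in H3; have eq12 := Hb _ _ _ _ H1 H3; subst.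
    by [].
have frE : forall w p c, frun step w (p, c) =
    if alive p w then omap (pair (endst p w)) (iterO inc (cnt g p w) c) else None.
  elim=> [|a w IH] p c //=.
  rewrite /step /=; case: ifP => H1 /=; last by [].
  case: ifP => H2 /=.
    rewrite add0n iterO_Sr; case: (inc c) => [c1|] /=.
      by rewrite IH.
    by rewrite iter_none; case: (alive _ _).
  by rewrite add0n IH.
exists (Q * C)%type, step, (fun x => (x == (p0, c0))%:R),
  (fun x => ((x.1 == q0) && pc x.2)%:R); split => // w.
rewrite /fsem (bigD1 (p0, c0)) //= eqxx mul1r big1 ?addr0; last first.
  by move=> x /negbTE ->; rewrite mul0r.
rewrite frE; case: (alive p0 w) => //=.
by case: (iterO inc (cnt g p0 w) c0) => [c|] //=; rewrite andbF.
Qed.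

Lemma wt_cnt p w : wt p w = \prod_(g : R) g ^+ cnt g p w.
Proof.
elim: w p => [|a w IH] p /=.
  by rewrite big1.
rewrite IH.
rewrite [RHS](eq_bigr (fun g => g ^+ (wa_sigma A p a (tstep a p) == g) * g ^+ cnt g (tstep a p) w)); last first.
  by move=> g _; rewrite /= exprD.
rewrite big_split /=; congr (_ * _).
rewrite (bigD1 (wa_sigma A p a (tstep a p))) //= eqxx expr1 big1 ?mulr1 //.
by move=> g /negbTE; rewrite eq_sym => ->.
Qed.

Lemma CF_T1 (Hf : fdet) (Hb : bdet) (p0 q0 : Q) (g : R) (P' m : nat) :
  CF (fun w => ((alive p0 w && (endst p0 w == q0)) && ((cnt g p0 w %% P'.+1)%N == m))%:R).
Proof.
pose inc (c : 'I_P'.+1) : option 'I_P'.+1 := Some (inZp c.+1).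
have Hinc : forall c1 c2 c, inc c1 = Some c -> inc c2 = Some c -> c1 = c2.
  move=> c1 c2 c [<-] [] /eqP; rewrite -(addn1 c1) -(addn1 c2) eqn_modDr.
  by rewrite !modn_small // => /eqP E'; apply: val_inj.
have itE n : iterO inc n ord0 = Some (inZp n).
  elim: n => [|n IH]; first by congr Some; apply: val_inj; rewrite /= mod0n.
  rewrite /iterO iterS -/(iterO inc n ord0) IH /=; congr Some; apply: val_inj.
  by rewrite /= -addn1 modnDml addn1.
apply: (CF_ext (CF_track Hf Hb Hinc g ord0 (fun c => val c == m) p0 q0)) => w.
by rewrite itE.
Qed.

Lemma CF_T2 (Hf : fdet) (Hb : bdet) (p0 q0 : Q) (g : R) (j : nat) :
  CF (fun w => ((alive p0 w && (endst p0 w == q0)) && (cnt g p0 w == j)%N)%:R).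
Proof.
pose inc (c : 'I_j.+1) : option 'I_j.+1 := insub c.+1.
have Hinc : forall c1 c2 c, inc c1 = Some c -> inc c2 = Some c -> c1 = c2.
  move=> c1 c2 c; rewrite /inc.
  case: insubP => // u _ Eu [<-]; case: insubP => // u' _ Eu' [E].
  by apply: val_inj; apply: succn_inj; rewrite -Eu -Eu' E.
have itE n : iterO inc n ord0 = insub n.
  elim: n => [|n IH]; first by rewrite /iterO /=; case: insubP => [u _ Eu|] //; congr Some; exact: val_inj.
  rewrite /iterO iterS -/(iterO inc n ord0) IH /=.
  case: insubP => [u Hu Eu|Hn] /=; first by rewrite /inc Eu.
  rewrite insubF //; apply: contraNF Hn; exact: ltnW.
apply: (CF_ext (CF_track Hf Hb Hinc g ord0 (fun c => val c == j) p0 q0)) => w.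
rewrite itE; congr ((_ && _)%:R).
case: insubP => [u _ Eu|Hn] /=; first by rewrite Eu.
apply/esym/negbTE; apply: contraNneq Hn => ->; exact: ltnSn.
Qed.

Lemma CF_G (Hf : fdet) (Hb : bdet) (p0 q0 : Q) (g : R) :
  CF (fun w => (alive p0 w && (endst p0 w == q0))%:R * g ^+ cnt g p0 w).
Proof.
have [K [P' [per [corr E]]]] := pow_decomp g.
apply: (CF_ext (CF_add
  (CF_sum (fun m : 'I_P'.+1 => CF_scale (per m) (CF_T1 Hf Hb p0 q0 g P' m)))
  (CF_sum (fun j : 'I_K => CF_scale (corr j) (CF_T2 Hf Hb p0 q0 g j))))) => w.
rewrite E mulrDr !mulr_sumr; congr (_ + _); apply: eq_bigr => i _;
  case: (alive _ _ && _); case: (_ == _); by rewrite /= ?mul0r ?mul1r ?mulr0 ?mulr1.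
Qed.

Lemma prod_b (b : bool) (F : R -> R) : \prod_(g : R) (b%:R * F g) = b%:R * \prod_g F g.
Proof.
case: b; first by rewrite mul1r; apply: eq_bigr => g _; rewrite mul1r.
by rewrite mul0r (bigD1 0) //= mul0r mul0r.
Qed.

Lemma CF_aut (Hf : fdet) (Hb : bdet) (x0 : Sigma) : CF (behaviour A).
Proof.
apply: (CF_ext (s := fun w => \sum_p \sum_q wa_iota A p * wa_tau A q *
   \prod_(g : R) ((alive p w && (endst p w == q))%:R * g ^+ cnt g p w))).
  apply: CF_sum => p; apply: CF_sum => q; apply: CF_scale; apply: CF_prod => g.
  exact: CF_G.
move=> w; rewrite (beh_fb Hf x0); apply: eq_bigr => p _.
under eq_bigr => q _ do rewrite prod_b -wt_cnt.
case: (alive p w) => /=.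
  rewrite (bigD1 (endst p w)) // eqxx mul1r big1 ?addr0; first by rewrite /= addr0 mulrAC.
  by move=> q /negbTE; rewrite eq_sym => ->; rewrite mul0r mulr0.
by apply: big1 => q _; rewrite mul0r mulr0.
Qed.

End Bridge.

Lemma natb_neq0 (b : bool) : ((b%:R : R) != 0) = b.
Proof. by case: b; rewrite ?oner_neq0 ?eqxx. Qed.

Lemma CF_Rev (x0 : Sigma) s : CF s -> Rev s.
Proof.
move=> [Q [st [i [t [Hi E]]]]].
pose A := @WAutomaton R Sigma Q (fun p a q => (st a p == Some q)%:R) i t.
have Hf : fdet A.
  by move=> p q q' a; rewrite /= !natb_neq0 => /eqP -> /eqP [].
have Hb : bdet A.
  move=> p p' q a; rewrite /= !natb_neq0 => /eqP E1 /eqP E2; exact: Hi E1 E2.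
exists Q, A; split; first by split.
have key : forall w p, (if alive A p w then wt A p w * t (endst A p w) else 0)
                       = oapp t 0 (frun st w p).
  elim=> [|a w' IH] p' /=; first by rewrite mul1r.
  have eE : endst A p' (a :: w') = endst A (tstep A a p') w' by [].
  case Es: (st a p') => [q|].
    have Tq : tstep A a p' = q by apply: (tstepP Hf); rewrite /= Es eqxx natb_neq0.
    rewrite /stf Tq eqxx natb_neq0 /= -IH.
    by case: (alive A q w'); rewrite ?mul1r ?mulr0.
  by rewrite eqxx.
move=> w; rewrite E (beh_fb Hf x0) /fsem; apply: eq_bigr => p _.
rewrite -key; case: (alive A p w); by rewrite ?mulrA ?mulr0.
Qed.

Lemma Rev_CF (x0 : Sigma) s : Rev s -> CF s.
Proof.
move=> [Q [A [[Hf Hb] E]]].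
by apply: (CF_ext (CF_aut Hf Hb x0)) => w; rewrite E.
Qed.

Lemma prop7_aux (Sigma_nonempty : (0 < #|Sigma|)%N) (r : series R Sigma) :
  Rev r <-> (forall x : R, RevL R (supp (add_const r x))).
Proof.
pose x0 := enum_val (Ordinal Sigma_nonempty).
split.
  move=> Hr x; exists (add_const r x); split => //.
  apply: (CF_Rev x0); exact: (CF_ext (CF_add (Rev_CF x0 Hr) (CF_const x))).
move=> H.
have Ind y : CF (fun w => ((r w == y)%:R : R)).
  have [s [Hs Es]] := H (- y).
  apply: (CF_ext (CF_fun (fun z => (z == 0)%:R) (Rev_CF x0 Hs))) => w /=.
  have := Es w; rewrite /supp /add_const => /negb_inj ->.
  by rewrite subr_eq0.
apply: (CF_Rev x0); apply: (CF_ext (CF_sum (fun y => CF_scale y (Ind y)))) => w /=.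
rewrite (bigD1 (r w)) //= eqxx mulr1 big1 ?addr0 //.
by move=> y /negbTE; rewrite eq_sym => ->; rewrite mulr0.
Qed.

End CFsec.

Local Close Scope ring_scope.

Theorem proposition7 (R : finComNzRingType) (Sigma : finType) (Sigma_nonempty : 0 < #|Sigma|)
  (r : series R Sigma) (r_rational : rational r) :
  Rev r <-> (forall x : R, RevL R (supp (add_const r x))).
Proof. exact: prop7_aux. Qed.
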